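(* Let $p$ be a prime with $p \equiv \pm 3 \pmod{10}$, and let $G = \mathrm{PSL}(2,p^2)$. If $m(G) = 3$, then $G$ fails the replacement property.
   Context: For a finite group $G$, a finite sequence $s=(g_1,\dots,g_k)$ of elements of $G$ is an irredundant generating sequence if $\langle g_1,\dots,g_k\rangle = G$ and $g_i \notin \langle g_j : j \neq i\rangle$ for every $i$. $m(G)$ denotes the maximal length of an irredundant generating sequence of $G$. An irredundant generating sequence $s=(g_1,\dots,g_k)$ satisfies the replacement property if for every nontrivial $g \in G$ there is an index $i$ such that $(g_1,\dots,g_{i-1},g,g_{i+1},\dots,g_k)$ generates $G$ (not necessarily irredundantly). $G$ satisfies the replacement property if every irredundant generating sequence of length $m(G)$ satisfies it; $G$ fails the replacement property otherwise. *)

(* Defs.v *)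
From mathcomp Require Import all_boot all_order all_algebra all_fingroup all_solvable all_field.
Set Implicit Arguments. Unset Strict Implicit. Unset Printing Implicit Defensive.
Import GRing.Theory.
Local Open Scope group_scope.

Section SL2.
Variable F : finFieldType.

Definition SL2_set : {set {'GL_2[F]}} := [set g | (\det (GLval g) == 1)%R].

Lemma SL2_group_set : group_set SL2_set.
Proof.
apply/group_setP; split; first by rewrite inE GL_1E det1.
move=> x y; rewrite !inE GL_MxE det_mulmx => /eqP -> /eqP ->.
by rewrite mulr1.
Qed.

Canonical SL2 : {group {'GL_2[F]}} := Group SL2_group_set.

Definition PSL2 := (SL2 / 'Z(SL2))%G.
End SL2.

Section Gen.
Variable gT : finGroupType.

Definition irredundant_gen_seq (G : {set gT}) (s : seq gT) : Prop :=
  <<[set x in s]>> = G /\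
  forall i : 'I_(size s),
    nth 1 s i \notin <<[set nth 1 s j | j : 'I_(size s) & j != i]>>.

Definition m_equals (G : {set gT}) (k : nat) : Prop :=
  (exists s, irredundant_gen_seq G s /\ size s = k) /\
  (forall s, irredundant_gen_seq G s -> size s <= k)%N.

Definition seq_replacement (G : {set gT}) (s : seq gT) : Prop :=
  forall g, g \in G -> g != 1 ->
    exists i : 'I_(size s), <<[set x in set_nth 1 s i g]>> = G.

Definition group_replacement (G : {set gT}) : Prop :=
  forall s k, m_equals G k -> irredundant_gen_seq G s -> size s = k ->
    seq_replacement G s.
End Gen.

(* Main.v *)
Require Import Defs.
From mathcomp Require Import all_boot all_order all_algebra all_fingroup all_solvable all_field.
From mathcomp Require Import ring zify.

Module AM.
Set Implicit Arguments. Unset Strict Implicit. Unset Printing Implicit Defensive.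
Import GRing.Theory.

Section M.
Variable F : fieldType.
Local Open Scope ring_scope.

Definition M2 (a b c d : F) : 'M[F]_2 :=
  \matrix_(i < 2, j < 2) if i == 0 then (if j == 0 then a else b) else (if j == 0 then c else d).

Lemma M2E (A : 'M[F]_2) : A = M2 (A 0 0) (A 0 1) (A 1 0) (A 1 1).
Proof. by apply/matrixP=> i j; rewrite mxE; case: i => [[|[|//]] ?]; case: j => [[|[|//]] ?]; congr (A _ _); apply: val_inj. Qed.

Lemma M2_00 a b c d : M2 a b c d 0 0 = a. Proof. by rewrite mxE. Qed.
Lemma M2_01 a b c d : M2 a b c d 0 1 = b. Proof. by rewrite mxE. Qed.
Lemma M2_10 a b c d : M2 a b c d 1 0 = c. Proof. by rewrite mxE. Qed.
Lemma M2_11 a b c d : M2 a b c d 1 1 = d. Proof. by rewrite mxE. Qed.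

Lemma M2_mul a b c d a' b' c' d' :
  M2 a b c d *m M2 a' b' c' d' = M2 (a*a' + b*c') (a*b' + b*d') (c*a' + d*c') (c*b' + d*d').
Proof.
apply/matrixP=> i j; rewrite !mxE !big_ord_recl big_ord0 !mxE.
case: i => [[|[|//]] ?]; case: j => [[|[|//]] ?]; by rewrite /= addr0.
Qed.

Lemma M2_det a b c d : \det (M2 a b c d) = a * d - b * c.
Proof.
rewrite (expand_det_row _ 0) !big_ord_recl big_ord0 /cofactor !det_mx11 !mxE /=.
by rewrite /= expr0 expr1 mul1r addr0 mulN1r mulrN.
Qed.

Lemma M2_1 : M2 1 0 0 1 = 1%:M.
Proof. by apply/matrixP=> i j; rewrite !mxE; case: i => [[|[|//]] ?]; case: j => [[|[|//]] ?]. Qed.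

Lemma M2_eq a b c d a' b' c' d' : a = a' -> b = b' -> c = c' -> d = d' -> M2 a b c d = M2 a' b' c' d'.
Proof. by move=> -> -> -> ->. Qed.

Lemma M2_inj a b c d a' b' c' d' : M2 a b c d = M2 a' b' c' d' ->
  [/\ a = a', b = b', c = c' & d = d'].
Proof.
move=> e; split.
- by rewrite -(M2_00 a b c d) e M2_00.
- by rewrite -(M2_01 a b c d) e M2_01.
- by rewrite -(M2_10 a b c d) e M2_10.
- by rewrite -(M2_11 a b c d) e M2_11.
Qed.

Lemma M2_map (f : F -> F) a b c d : map_mx f (M2 a b c d) = M2 (f a) (f b) (f c) (f d).
Proof. by apply/matrixP=> i j; rewrite !mxE; case: i => [[|[|//]] ?]; case: j => [[|[|//]] ?]. Qed.

Lemma M2_opp a b c d : - M2 a b c d = M2 (-a) (-b) (-c) (-d).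
Proof. by apply/matrixP=> i j; rewrite !mxE; case: i => [[|[|//]] ?]; case: j => [[|[|//]] ?]. Qed.
End M.

End AM.
Import AM.

Module BM.
Set Implicit Arguments. Unset Strict Implicit. Unset Printing Implicit Defensive.
Import GRing.Theory.

Section G.
Variable F : finFieldType.
Local Open Scope ring_scope.
Local Open Scope group_scope.
Local Notation gT := (matrix_GLtype__canonical__fingroup_FinGroup 2 F).

Definition toGL (M : 'M[F]_2) : gT := insubd (1 : gT) M.

Lemma toGLK (M : 'M[F]_2) : \det M = 1%R -> GLval (toGL M) = M.
Proof.
move=> dM; rewrite /toGL insubdK //.
by rewrite -topredE /= unitmxE dM unitr1.
Qed.

Definition um (t : F) := M2 1 t 0 1.
Definition lm (t : F) := M2 1 0 t 1.
Definition dm (x : F) := M2 x 0 0 x^-1.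
Definition u t := toGL (um t).
Definition l t := toGL (lm t).
Definition d x := toGL (dm x).

Lemma det_um t : \det (um t) = 1%R. Proof. by rewrite M2_det; ring. Qed.
Lemma det_lm t : \det (lm t) = 1%R. Proof. by rewrite M2_det; ring. Qed.
Lemma det_dm x : x != 0%R -> \det (dm x) = 1%R. Proof. by move=> x0; rewrite M2_det mulr0 subr0 mulfV. Qed.

Lemma uK t : GLval (u t) = um t. Proof. exact/toGLK/det_um. Qed.
Lemma lK t : GLval (l t) = lm t. Proof. exact/toGLK/det_lm. Qed.
Lemma dK x : x != 0%R -> GLval (d x) = dm x. Proof. by move=> x0; apply/toGLK/det_dm. Qed.

Lemma GL_eq (x y : gT) : GLval x = GLval y -> x = y.
Proof. exact: val_inj. Qed.

Lemma uD s t : u (s + t)%R = u s * u t.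
Proof. by apply: GL_eq; rewrite GL_MxE !uK /um M2_mul; apply: M2_eq; ring. Qed.
Lemma lD s t : l (s + t)%R = l s * l t.
Proof. by apply: GL_eq; rewrite GL_MxE !lK /lm M2_mul; apply: M2_eq; ring. Qed.
Lemma u0 : u 0%R = 1.
Proof. by apply: GL_eq; rewrite uK /um M2_1. Qed.
Lemma l0 : l 0%R = 1.
Proof. by apply: GL_eq; rewrite lK /lm M2_1. Qed.

Lemma duD x t : x != 0%R -> d x * u t * d x^-1%R = u (x ^+ 2 * t)%R.
Proof.
move=> x0; apply: GL_eq; rewrite !GL_MxE !dK ?invr_eq0 // !uK /dm /um !M2_mul invrK.
by apply: M2_eq; field.
Qed.
Lemma dlD x t : x != 0%R -> d x^-1%R * l t * d x = l (x ^+ 2 * t)%R.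
Proof.
move=> x0; apply: GL_eq; rewrite !GL_MxE !dK ?invr_eq0 // !lK /dm /lm !M2_mul invrK.
by apply: M2_eq; field.
Qed.

Lemma inSL2 x : (x \in SL2 F) = (\det (GLval x) == 1%R).
Proof. by rewrite inE. Qed.

End G.

Section Gen2.
Variable F : finFieldType.
Local Open Scope ring_scope.
Local Open Scope group_scope.
Local Notation gT := (matrix_GLtype__canonical__fingroup_FinGroup 2 F).
Local Notation u := (@u F).
Local Notation l := (@l F).
Variable b : F.
Hypothesis b0 : b != 0%R.
Hypothesis hspan : forall x : F, exists n m : nat, x = (n%:R + m%:R * b ^+ 2)%R.

Lemma dV (x : F) : x != 0%R -> d x^-1%R = (d x)^-1.
Proof.
move=> x0; apply/esym/eqP; rewrite eq_invg_mul; apply/eqP/GL_eq.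
rewrite GL_MxE !dK ?invr_eq0 // /dm M2_mul GL_1E.
transitivity (M2 (1:F) 0 0 1); last exact: M2_1. apply: M2_eq. all: field; by rewrite ?x0 ?oner_eq0.
Qed.

Definition Hg := <<[set l 1%R; u 1%R; d b]>>.

Lemma l1H : l 1%R \in Hg. Proof. by apply: mem_gen; rewrite !inE eqxx. Qed.
Lemma u1H : u 1%R \in Hg. Proof. by apply: mem_gen; rewrite !inE eqxx !orbT. Qed.
Lemma dbH : d b \in Hg. Proof. by apply: mem_gen; rewrite !inE eqxx !orbT. Qed.
Lemma dbVH : d b^-1%R \in Hg. Proof. by rewrite dV // groupV dbH. Qed.

Lemma uH t : u t \in Hg.
Proof.
have un n : u n%:R \in Hg.
  elim: n => [|n IH]; first by rewrite u0 group1.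
  by rewrite mulrS uD groupM // u1H.
have ub2 : u (b ^+ 2)%R \in Hg.
  by rewrite -[(b ^+ 2)%R]mulr1 -duD // !groupM // ?u1H ?dbH ?dbVH.
have ubn m : u (m%:R * b ^+ 2)%R \in Hg.
  elim: m => [|m IH]; first by rewrite mul0r u0 group1.
  by rewrite mulrS mulrDl mul1r uD groupM.
by have [n [m ->]] := hspan t; rewrite uD groupM.
Qed.

Lemma lH t : l t \in Hg.
Proof.
have ln n : l n%:R \in Hg.
  elim: n => [|n IH]; first by rewrite l0 group1.
  by rewrite mulrS lD groupM // l1H.
have lb2 : l (b ^+ 2)%R \in Hg.
  by rewrite -[(b ^+ 2)%R]mulr1 -dlD // !groupM // ?l1H ?dbH ?dbVH.
have lbn m : l (m%:R * b ^+ 2)%R \in Hg.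
  elim: m => [|m IH]; first by rewrite mul0r l0 group1.
  by rewrite mulrS mulrDl mul1r lD groupM.
by have [n [m ->]] := hspan t; rewrite lD groupM.
Qed.

Lemma SL2_Hc x : x \in SL2 F -> (GLval x 1%R 0%R != 0)%R -> x \in Hg.
Proof.
rewrite inSL2 => /eqP dx c0.
set c := GLval x 1%R 0%R in c0.
suff -> : x = u ((GLval x 0%R 0%R - 1) / c)%R * l c * u ((GLval x 1%R 1%R - 1) / c)%R.
  by rewrite !groupM ?uH ?lH.
apply: GL_eq; rewrite !GL_MxE !uK lK /um /lm !M2_mul.
rewrite [LHS]M2E -/c; move: dx; rewrite [GLval x]M2E M2_det -/c.
set a := GLval x 0%R 0%R; set b' := GLval x 0%R 1%R; set e := GLval x 1%R 1%R => dx.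
have -> : b' = ((a * e - 1) / c)%R.
  by apply: (mulIf c0); rewrite mulfVK // -dx; ring.

rewrite ?M2_00 ?M2_01 ?M2_10 ?M2_11; apply: M2_eq; field; by rewrite ?c0.

Qed.

Lemma SL2_H : SL2 F \subset Hg.
Proof.
apply/subsetP => x xS.
have [c0|c0] := eqVneq (GLval x 1%R 0%R) 0%R; last exact: SL2_Hc.
have ly : l 1%R * x \in SL2 F by rewrite groupM // inSL2 lK det_lm.
have -> : x = (l 1%R)^-1 * (l 1%R * x) by rewrite mulKg.
rewrite groupM ?groupV ?l1H //; apply: SL2_Hc => //.
move: xS; rewrite inSL2 GL_MxE lK /lm [GLval x]M2E M2_mul M2_det c0 !M2_10.
rewrite !mul1r !mulr0 ?addr0 ?subr0; apply: contraTneq => ->; by rewrite mul0r eq_sym oner_eq0.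
Qed.

Lemma gen_SL2 : Hg = SL2 F.
Proof.
apply/eqP; rewrite eqEsubset SL2_H andbT gen_subG; apply/subsetP => x.
rewrite !inE; case/orP => [/orP[]|] /eqP ->; rewrite ?lK ?uK ?dK ?det_lm ?det_um ?det_dm //.
Qed.
End Gen2.

End BM.
Import BM.

Module CM.
Set Implicit Arguments. Unset Strict Implicit. Unset Printing Implicit Defensive.
Import GRing.Theory.
Local Open Scope ring_scope.

Section FF.
Variable F : finFieldType.
Variable k : nat.
Hypothesis k0 : (0 < k)%N.
Local Notation p := (k.*2.+1).
Hypothesis hp : prime p.
Hypothesis hF : #|F| = (p ^ 2)%N.

Lemma chp : p \in [pchar F].
Proof. exact: card_finPcharP hF hp. Qed.

Lemma prim_exists : exists b : F, (#|F|.-1).-primitive_root b.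
Proof.
have n0 : (0 < #|F|.-1)%N by rewrite hF; nia.
have hall : all (#|F|.-1).-unity_root (enum [set~ (0 : F)]).
  apply/allP => x; rewrite mem_enum in_setC1 unity_rootE => x0.
  apply/eqP; apply: (mulfI x0); rewrite -exprS prednK ?expf_card ?mulr1 //.
  by rewrite hF; nia.
have hsz : (#|F|.-1 <= size (enum [set~ (0%R : F)]))%N by rewrite -cardE cardsC1 leqnn.
have /hasP[b _ pb] := has_prim_root n0 hall (enum_uniq _) hsz.
by exists b.
Qed.

Lemma exists_ba : exists b a : F,
  [/\ b != 0, (b ^+ 2) ^+ p != b ^+ 2, a != 0, a ^+ p = - a & a ^+ 2 != 1].
Proof.
have [b pb] := prim_exists.
have hn : #|F|.-1 = (4 * k * k.+1)%N by rewrite hF; nia.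
rewrite hn in pb.
have ord i : (0 < i < 4 * k * k.+1)%N -> b ^+ i != 1.
  by move=> /andP[i0 ilt]; rewrite -(prim_order_dvd pb) gtnNdvd.
have b0 : b != 0.
  apply/eqP => bz; have := prim_expr_order pb; rewrite bz expr0n.
  have -> : (4 * k * k.+1 == 0)%N = false by nia.
  by move/eqP; rewrite /= eq_sym oner_eq0.
exists b, (b ^+ k.+1); split.
- exact: b0.
- apply: contraNneq (ord (k.*2.*2) _); last by apply/andP; split; nia.
  rewrite -exprM => e; apply/eqP; apply: (mulIf (expf_neq0 2 b0)).
  by rewrite mul1r -exprD -e; congr (_ ^+ _); nia.
- exact: expf_neq0.
- set e := b ^+ (k.*2 * k.+1).
  have e2 : e ^+ 2 = 1 by rewrite -exprM -(prim_expr_order pb); congr (_ ^+ _); nia.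
  have e1 : e != 1 by apply: ord; apply/andP; split; nia.
  have em : e = -1.
    by move/eqP: e2; rewrite sqrf_eq1 (negbTE e1) => /eqP.
  rewrite -exprM (_ : (k.+1 * p = k.+1 + k.*2 * k.+1)%N); last by nia.
  by rewrite exprD -/e em mulrN1.
- by rewrite -exprM; apply: ord; apply/andP; split; nia.
Qed.

Lemma frob_nat n : (n%:R : F) ^+ p = n%:R.
Proof. by rewrite -(pFrobenius_autE chp) rmorph_nat. Qed.

Lemma natr_inj_lt n n' : (n < p)%N -> (n' < p)%N -> (n%:R : F) = n'%:R -> n = n'.
Proof.
wlog le : n n' / (n <= n')%N.
  by move=> W hn hn' e; case: (leqP n n') => h; [apply: W | apply/esym/W => //; apply: ltnW].
move=> hn hn' e; apply/eqP; rewrite eqn_leq le /=.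
have : ((n' - n)%:R : F) = 0 by rewrite natrB // e subrr.
move/eqP; rewrite -(dvdn_pcharf chp).
case: (posnP (n' - n)) => [h|h]; first by move=> _; lia.
by rewrite gtnNdvd //; lia.
Qed.

Lemma span2 (t : F) : t ^+ p != t -> forall x : F, exists n m : nat, x = n%:R + m%:R * t.
Proof.
move=> tp x.
pose f := fun nm : 'I_p * 'I_p => (nm.1 : nat)%:R + (nm.2 : nat)%:R * t : F.
have finj : injective f.
  move=> [n m] [n' m']; rewrite /f /= => e.
  have [mm|mm] := eqVneq (m : nat) (m' : nat).
    rewrite mm in e; move/addIr: e => /natr_inj_lt e.
    by congr (_, _); apply: val_inj => //; apply: e.
  have d0 : (m%:R - m'%:R : F) != 0.
    by rewrite subr_eq0; apply: contra mm => /eqP /natr_inj_lt ->.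
  have te : t = (n'%:R - n%:R) / (m%:R - m'%:R).
    apply: (mulIf d0); rewrite mulfVK //; apply/eqP; rewrite -subr_eq0.
    rewrite (_ : t * (m%:R - m'%:R) - (n'%:R - n%:R) = (n%:R + m%:R * t) - (n'%:R + m'%:R * t)); first by rewrite e subrr.
    ring.
  case/negP: tp; apply/eqP.
  by rewrite te -(pFrobenius_autE chp) fmorph_div !rmorphB !rmorph_nat.
have := @inj_card_onto _ _ f finj _ x.
rewrite card_prod !card_ord hF => /(_ (leqnn _)) /codomP [[n m] ->].
by exists n, m.
Qed.
End FF.

End CM.
Import CM.

Module EM.
Set Implicit Arguments. Unset Strict Implicit. Unset Printing Implicit Defensive.
Local Open Scope group_scope.

Section Abs.
Variable gT : finGroupType.
Variables (Q K1 K2 K3 : {group gT}) (x1 x2 x3 g : gT).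
Hypothesis genQ : <<[set x1; x2; x3]>> = Q.
Hypothesis nK1 : ~~ (Q \subset K1).
Hypothesis nK2 : ~~ (Q \subset K2).
Hypothesis nK3 : ~~ (Q \subset K3).
Hypotheses (x2K1 : x2 \in K1) (x3K1 : x3 \in K1) (gK1 : g \in K1).
Hypotheses (x1K2 : x1 \in K2) (x3K2 : x3 \in K2) (gK2 : g \in K2).
Hypotheses (x1K3 : x1 \in K3) (x2K3 : x2 \in K3) (gK3 : g \in K3).

Lemma set3E (a b c : gT) : [set x in [:: a; b; c]] = [set a; b; c].
Proof. by apply/setP => x; rewrite !inE orbA. Qed.

Lemma notall (K : {group gT}) : ~~ (Q \subset K) -> x1 \in K -> x2 \in K -> x3 \in K -> False.
Proof.
move=> nK a b c; case/negP: nK; rewrite -genQ gen_subG; apply/subsetP => x.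
by rewrite !inE => /orP[/orP[]|] /eqP ->.
Qed.

Lemma sub3 (K : {group gT}) (a b c : gT) : a \in K -> b \in K -> c \in K ->
  <<[set a; b; c]>> \subset K.
Proof.
move=> ha hb hc; rewrite gen_subG; apply/subsetP => x.
by rewrite !inE => /orP[/orP[]|] /eqP ->.
Qed.

Lemma abs_irr : irredundant_gen_seq Q [:: x1; x2; x3].
Proof.
split; first by rewrite set3E.
case=> i hi; apply/negP => hin.
set s := [:: x1; x2; x3] in hin *.
have H (K : {group gT}) : ~~ (Q \subset K) ->
    (forall j : 'I_3, j != Ordinal hi -> nth 1 s j \in K) -> False.
  move=> nK hj.
  have sK : <<[set nth 1 s j | j : 'I_3 & j != Ordinal hi]>> \subset K.
    by rewrite gen_subG; apply/subsetP => y /imsetP[j]; rewrite inE => jn ->; apply: hj.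
  have all (j : 'I_3) : nth 1 s j \in K.
    have [->|jn] := eqVneq j (Ordinal hi); last exact: hj.
    exact: (subsetP sK).
  exact: (notall nK (all (Ordinal (isT : 0 < 3)%N)) (all (Ordinal (isT : 1 < 3)%N)) (all (Ordinal (isT : 2 < 3)%N))).
move: hi H hin; case: i => [|[|[|//]]] hi H _.
- by apply: (H K1 nK1); case=> [[|[|[|//]]] ?] //=; rewrite eqE /=.
- by apply: (H K2 nK2); case=> [[|[|[|//]]] ?] //=; rewrite eqE /=.
- by apply: (H K3 nK3); case=> [[|[|[|//]]] ?] //=; rewrite eqE /=.
Qed.

Lemma abs_norep (i : 'I_3) : <<[set x in set_nth 1 [:: x1; x2; x3] i g]>> != Q.
Proof.
case: i => [[|[|[|//]]] ?] /=; rewrite set3E; apply/eqP => e.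
- by case/negP: nK1; rewrite -e sub3.
- by case/negP: nK2; rewrite -e sub3.
- by case/negP: nK3; rewrite -e sub3.
Qed.
End Abs.

End EM.
Import EM.

Module DM.
Set Implicit Arguments. Unset Strict Implicit. Unset Printing Implicit Defensive.
Import GRing.Theory.
Local Open Scope ring_scope.
Local Open Scope group_scope.

Section Main.
Variable F : finFieldType.
Variable k : nat.
Hypothesis k0 : (0 < k)%N.
Local Notation p := (k.*2.+1).
Hypothesis hp : prime p.
Hypothesis hF : #|F| = (p ^ 2)%N.
Local Notation gT := (matrix_GLtype__canonical__fingroup_FinGroup 2 F).
Local Notation u := (@u F).
Local Notation l := (@l F).

Let chF : p \in [pchar F] := chp hp hF.
Local Notation fr := (pFrobenius_aut chF).

Lemma mul10 (A B : 'M[F]_2) : (A *m B) 1%R 0%R = (A 1%R 0%R * B 0%R 0%R + A 1%R 1%R * B 1%R 0%R)%R.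
Proof. by rewrite [A]M2E [B]M2E M2_mul ?M2_10 ?M2_00 ?M2_11 ?M2_01. Qed.
Lemma mul01 (A B : 'M[F]_2) : (A *m B) 0%R 1%R = (A 0%R 0%R * B 0%R 1%R + A 0%R 1%R * B 1%R 1%R)%R.
Proof. by rewrite [A]M2E [B]M2E M2_mul ?M2_10 ?M2_00 ?M2_11 ?M2_01. Qed.

Definition K1s := [set x in SL2 F | GLval x 1%R 0%R == 0%R].
Definition K2s := [set x in SL2 F | GLval x 0%R 1%R == 0%R].
Definition K3s := [set x in SL2 F |
  (map_mx fr (GLval x) == GLval x) || (map_mx fr (GLval x) == - GLval x)%R].

Lemma K1_gs : group_set K1s.
Proof.
apply/group_setP; split; first by rewrite inE group1 andTb GL_1E mxE.
move=> x y; rewrite !inE => /andP[xS /eqP x0] /andP[yS /eqP y0].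
by rewrite GL_MxE det_mulmx (eqP xS) (eqP yS) mulr1 eqxx /= mul10 x0 y0 mul0r mulr0 addr0.
Qed.
Lemma K2_gs : group_set K2s.
Proof.
apply/group_setP; split; first by rewrite inE group1 andTb GL_1E mxE.
move=> x y; rewrite !inE => /andP[xS /eqP x0] /andP[yS /eqP y0].
by rewrite GL_MxE det_mulmx (eqP xS) (eqP yS) mulr1 eqxx /= mul01 x0 y0 mul0r mulr0 addr0.
Qed.
Lemma K3_gs : group_set K3s.
Proof.
apply/group_setP; split.
  by rewrite inE group1 andTb GL_1E map_mx1 eqxx.
move=> x y; rewrite !inE => /andP[xS hx] /andP[yS hy].
rewrite GL_MxE det_mulmx (eqP xS) (eqP yS) mulr1 eqxx /= map_mxM.
by case/orP: hx => /eqP ->; case/orP: hy => /eqP ->;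
  rewrite ?mulNmx ?mulmxN ?opprK eqxx ?orbT.
Qed.
Canonical K1 := Group K1_gs.
Canonical K2 := Group K2_gs.
Canonical K3 := Group K3_gs.

Local Notation Z := 'Z(SL2 F).

Lemma u1S : u 1%R \in SL2 F. Proof. by rewrite inSL2 uK det_um. Qed.
Lemma l1S : l 1%R \in SL2 F. Proof. by rewrite inSL2 lK det_lm. Qed.
Lemma dS x : x != 0%R -> d x \in SL2 F. Proof. by move=> x0; rewrite inSL2 dK ?det_dm. Qed.

Lemma centerE z : z \in Z -> exists c : F, GLval z = M2 c 0 0 c /\ (c = 1 \/ c = -1)%R.
Proof.
case/centerP => zS cz.
have /(congr1 GLval) eu : z * u 1%R = u 1%R * z by apply: cz; exact: u1S.
have /(congr1 GLval) el : z * l 1%R = l 1%R * z by apply: cz; exact: l1S.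
move: zS eu el; rewrite inSL2 !GL_MxE uK lK /um /lm [GLval z]M2E !M2_mul M2_det.
set a := GLval z 0 0; set b := GLval z 0 1%R; set c := GLval z 1%R 0; set e := GLval z 1%R 1%R.
rewrite !mulr1 !mul1r !mulr0 !mul0r !addr0 !add0r.
move=> dz; case/M2_inj => e1 e2 e3 e4; case/M2_inj => f1 f2 f3 f4.
have c0 : c = 0%R by apply: (@addrI _ a); rewrite -e1 addr0.
have b0 : b = 0%R by apply: (@addrI _ a); rewrite f1 addr0.
have ae : a = e by move: e2; rewrite b0 addr0 add0r.
move: dz; rewrite b0 c0 mulr0 subr0 -ae.
rewrite -expr2 sqrf_eq1 => /orP[] /eqP ha; exists a; split => //; by [left|right].
Qed.


Lemma frpm1 (c : F) : (c = 1 \/ c = -1)%R -> fr c = c.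
Proof. by case=> ->; rewrite ?rmorph1 ?rmorphN1. Qed.

Lemma nZ : SL2 F \subset 'N(Z).
Proof. exact: normal_norm (center_normal _). Qed.

Lemma ZS z : z \in Z -> z \in SL2 F.
Proof. by apply: (subsetP (center_sub _)). Qed.

Lemma ZK1 : Z \subset K1.
Proof.
apply/subsetP => z zZ; have [c [hz _]] := centerE zZ.
by rewrite inE ZS //= hz M2_10.
Qed.
Lemma ZK2 : Z \subset K2.
Proof.
apply/subsetP => z zZ; have [c [hz _]] := centerE zZ.
by rewrite inE ZS //= hz M2_01.
Qed.
Lemma ZK3 : Z \subset K3.
Proof.
apply/subsetP => z zZ; have [c [hz hc]] := centerE zZ.
by rewrite inE ZS //= hz M2_map rmorph0 frpm1 // eqxx.
Qed.

Lemma u1K1 : u 1%R \in K1. Proof. by rewrite inE u1S /= uK M2_10. Qed.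
Lemma u1K3 : u 1%R \in K3. Proof. by rewrite inE u1S /= uK /um M2_map rmorph0 rmorph1 eqxx. Qed.
Lemma l1K2 : l 1%R \in K2. Proof. by rewrite inE l1S /= lK M2_01. Qed.
Lemma l1K3 : l 1%R \in K3. Proof. by rewrite inE l1S /= lK /lm M2_map rmorph0 rmorph1 eqxx. Qed.
Lemma dK1 x : x != 0%R -> d x \in K1. Proof. by move=> x0; rewrite inE dS //= dK // M2_10. Qed.
Lemma dK2 x : x != 0%R -> d x \in K2. Proof. by move=> x0; rewrite inE dS //= dK // M2_01. Qed.
Lemma dK3 x : x != 0%R -> (x ^+ p = - x)%R -> d x \in K3.
Proof.
move=> x0 xp; rewrite inE dS //= dK // /dm M2_map rmorph0 !pFrobenius_autE.
by rewrite exprVn xp invrN M2_opp oppr0 eqxx orbT.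
Qed.

Lemma l1nK1 : l 1%R \notin K1.
Proof. by rewrite inE l1S /= lK M2_10 oner_eq0. Qed.
Lemma u1nK2 : u 1%R \notin K2.
Proof. by rewrite inE u1S /= uK M2_01 oner_eq0. Qed.
Lemma dnK3 x : x != 0%R -> ((x ^+ 2) ^+ p != x ^+ 2)%R -> d x \notin K3.
Proof.
move=> x0 xp; rewrite inE dS //= dK // /dm M2_map M2_opp.
apply/negP => /orP[] /eqP /M2_inj [h _ _ _]; case/eqP: xp;
  rewrite -exprM mulnC exprM; move: h; rewrite pFrobenius_autE => ->.
  by [].
by rewrite sqrrN.
Qed.

Lemma nsub (K : {group gT}) w : Z \subset K -> w \in SL2 F -> w \notin K ->
  ~~ (PSL2 F \subset (K / Z)%G).
Proof.
move=> ZK wS wK; rewrite /PSL2 /= quotientSGK ?nZ //.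
by apply/negP => /subsetP /(_ w wS); apply/negP.
Qed.

Lemma main_k : m_equals (PSL2 F) 3 -> ~ group_replacement (PSL2 F).
Proof.
move=> hm HR.
have [b [a [b0 bp a0 ap a2]]] := exists_ba k0 hp hF.
have hspan := span2 k0 hp hF bp.
have nK1 := nsub ZK1 l1S l1nK1.
have nK2 := nsub ZK2 u1S u1nK2.
have nK3 := nsub ZK3 (dS b0) (dnK3 b0 bp).
have genQ : <<[set coset Z (l 1%R); coset Z (u 1%R); coset Z (d b)]>> = PSL2 F.
  have NL := subsetP nZ _ l1S; have NU := subsetP nZ _ u1S; have ND := subsetP nZ _ (dS b0).
  have e : [set l 1%R; u 1%R; d b] / Z = [set coset Z (l 1%R); coset Z (u 1%R); coset Z (d b)].
    by rewrite !quotientU !quotient_set1.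
  rewrite -e -quotient_gen; first by rewrite [<<_>>](gen_SL2 b0 hspan).
  by apply/subsetP => x /setUP[/setUP[]|] /set1P ->.
have mq (K : {group gT}) x : x \in K -> coset Z x \in (K / Z)%G by move=> ?; apply: mem_quotient.
have irr := abs_irr genQ nK1 nK2 nK3 (mq _ _ u1K1) (mq _ _ (dK1 b0))
  (mq _ _ l1K2) (mq _ _ (dK2 b0)) (mq _ _ l1K3) (mq _ _ u1K3).
have gQ : coset Z (d a) \in PSL2 F by apply: mem_quotient; exact: dS.
have g1 : coset Z (d a) != 1.
  apply/negP => /eqP /(coset_idr (subsetP nZ _ (dS a0))) /centerE [c [hc _]].
  move: hc; rewrite dK // /dm => /M2_inj [ha _ _ hai].
  by move: a2; rewrite expr2 {2}ha -hai mulfV // eqxx.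
have [i hi] := HR _ 3 hm irr erefl _ gQ g1.
move: (abs_norep nK1 nK2 nK3 (mq _ _ u1K1) (mq _ _ (dK1 b0)) (mq _ _ (dK1 a0))
  (mq _ _ l1K2) (mq _ _ (dK2 b0)) (mq _ _ (dK2 a0))
  (mq _ _ l1K3) (mq _ _ u1K3) (mq _ _ (dK3 a0 ap)) i).
by rewrite hi eqxx.
Qed.
End Main.

End DM.
Import DM.

Theorem theorem2p6 (p : nat) (F : finFieldType) :
  prime p -> (p %% 10 = 3 \/ p %% 10 = 7)%N -> #|F| = (p ^ 2)%N ->
  m_equals (PSL2 F) 3 -> ~ group_replacement (PSL2 F).
Proof.
move=> hp hmod hF.
have h2 : (p %% 2 = 1)%N by lia.
have op : odd p by move: h2; rewrite modn2; case: (odd p).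
have k0 : (0 < p./2)%N by rewrite -divn2; lia.
have ep : p = (p./2).*2.+1 by rewrite -[p in LHS]odd_double_half op add1n.
move: hp hF; rewrite ep => hp hF.
exact: main_k k0 hp hF.
Qed.
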